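(* Let $p,q$ be integers with $1+|p|<|q|$ and let $g\in\mathbb{Z}[x]$. Let $\varphi_g:\mathrm{Dom}_{p,q}\to\mathrm{Dom}_{p,q}$ be the map sending $w$ to the unique $w'\in\mathrm{Dom}_{p,q}$ with $\psi_{p,q}(w')=[g\cdot f_w]_\sim$, where $f_w$ is the polynomial represented by $w$. Then $\varphi_g$ is FA-recognizable (its graph $\{(w,\varphi_g(w))\}$ is an FA-recognizable binary relation).
   Context: Let $p,q$ be integers with $1+|p|<|q|$ and $t(x)=x^2+px-q$. For $f,g\in\mathbb{Z}[x]$ write $f\sim g$ if $t$ divides $f-g$; identify $\mathbb{Z}^2$ with the additive group of $\mathbb{Z}[x]/\langle t\rangle$ via $(h_1,h_2)\mapsto[h_1x+h_2]_\sim$, and put $\eta=[x]_\sim$, $\xi=[1]_\sim$. A polynomial $\sum a_ix^i$ is reduced if $|a_i|<|q|$ for all $i$. Let $\Sigma_q=\{-(|q|-1),\dots,|q|-1\}$ with the order $-(|q|-1)<\dots<|q|-1$; a string $a_0a_1\dots a_n\in\Sigma_q^*$ represents the reduced polynomial $a_nx^n+\dots+a_1x+a_0$, and two strings are equivalent if their polynomials are $\sim$-equivalent. $\mathrm{Dom}_{p,q}$ is the set of $w\in\Sigma_q^*$ such that no string $u$ strictly smaller than $w$ in the length-lexicographic order on $\Sigma_q^*$ is equivalent to $w$, and $\psi_{p,q}:\mathrm{Dom}_{p,q}\to\mathbb{Z}^2$ sends $w$ to the $\sim$-class of the polynomial it represents (this is a bijection). For strings $w_1,\dots,w_m$ over an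 alphabet $\Sigma$, their convolution $w_1\otimes\dots\otimes w_m$ is the string over $(\Sigma\cup\{\diamond\})^m$ of length $\max|w_i|$ whose $k$-th letter is the column $(\sigma_1,\dots,\sigma_m)$, $\sigma_i$ being the $k$-th letter of $w_i$ if $k\le|w_i|$ and the padding symbol $\diamond$ otherwise. A relation $R\subseteq(\Sigma^* )^m$ is FA-recognizable if $\{w_1\otimes\dots\otimes w_m:(w_1,\dots,w_m)\in R\}$ is accepted by a finite automaton; a function is FA-recognizable if its graph is. *)

(* Defs.v *)
From HB Require Import structures.
From mathcomp Require Import all_boot all_order all_algebra.
Set Implicit Arguments. Unset Strict Implicit. Unset Printing Implicit Defensive.
Import Order.TTheory GRing.Theory Num.Theory.
Local Open Scope ring_scope.

Definition tpoly (p q : int) : {poly int} := 'X^2 + p%:P * 'X - q%:P.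

Definition simeq (p q : int) (f g : {poly int}) : Prop :=
  exists h : {poly int}, f - g = h * tpoly p q.

Definition in_Sigma (q : int) (w : seq int) : bool := all (fun a => `|a| < `|q|) w.

(* the string a_0 a_1 ... a_n represents a_n x^n + ... + a_1 x + a_0 *)
Definition poly_of (w : seq int) : {poly int} := Poly w.

Definition str_equiv (p q : int) (u w : seq int) : Prop :=
  simeq p q (poly_of u) (poly_of w).

(* strict lexicographic order (used on strings of equal length) *)
Fixpoint lex_lt (u w : seq int) : bool :=
  match u, w with
  | a :: u', b :: w' => (a < b) || ((a == b) && lex_lt u' w')
  | _, _ => false
  end.

Definition llex_lt (u w : seq int) : bool :=
  (size u < size w)%N || ((size u == size w) && lex_lt u w).

Definition Dom (p q : int) (w : seq int) : Prop :=
  in_Sigma q w /\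
  forall u : seq int, in_Sigma q u -> llex_lt u w -> ~ str_equiv p q u w.

Definition phi_graph (p q : int) (g : {poly int}) (w w' : seq int) : Prop :=
  Dom p q w /\ Dom p q w' /\ simeq p q (poly_of w') (g * poly_of w).

(* convolution of two strings; None is the padding symbol *)
Fixpoint conv2 (u w : seq int) {struct u} : seq (option int * option int) :=
  match u with
  | [::] => map (fun b => (None, Some b)) w
  | a :: u' =>
      match w with
      | [::] => (Some a, None) :: conv2 u' [::]
      | b :: w' => (Some a, Some b) :: conv2 u' w'
      end
  end.

Record dfa (A : Type) := DFA {
  dfa_state : finType;
  dfa_start : dfa_state;
  dfa_final : pred dfa_state;
  dfa_trans : dfa_state -> A -> dfa_state }.

Definition dfa_accepts (A : Type) (M : dfa A) (x : seq A) : bool :=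
  @dfa_final A M (foldl (@dfa_trans A M) (@dfa_start A M) x).

Definition FA_recognizable_lang (A : Type) (L : seq A -> Prop) : Prop :=
  exists M : dfa A, forall x, dfa_accepts M x <-> L x.

Definition FA_recognizable_rel2 (R : seq int -> seq int -> Prop) : Prop :=
  FA_recognizable_lang (fun x => exists u w, R u w /\ x = conv2 u w).

(* Main.v *)
Require Import Defs.
From HB Require Import structures.
From mathcomp Require Import all_boot all_order all_algebra.
From mathcomp Require Import zify ring lra.
Import Order.TTheory GRing.Theory Num.Theory.
Local Open Scope ring_scope.

Lemma tpoly_low (p q : int) : (size ((p%:P * 'X - q%:P)%R : {poly int}) < 3)%N.
Proof.
apply: (leq_ltn_trans (size_add _ _)). rewrite size_opp size_polyC.
rewrite gtn_max.
apply/andP; split; last by case: (q != 0).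
by apply: (leq_ltn_trans (size_polyMleq _ _)); rewrite size_polyX size_polyC; case: (p != 0).
Qed.

Lemma tpoly_size (p q : int) : size (tpoly p q) = 3%N.
Proof. by rewrite /tpoly -addrA size_addl size_polyXn // tpoly_low. Qed.

Lemma tpoly_monic (p q : int) : tpoly p q \is monic.
Proof.
by rewrite monicE /tpoly -addrA lead_coefDl ?lead_coefXn // size_polyXn tpoly_low.
Qed.


Definition cstep (p q : int) (s : int * int) (c : int) : option (int * int) :=
  let v := p * s.1 + s.2 - c in
  if (q %| v)%Z then Some ((v %/ q)%Z, s.1) else None.

Fixpoint crun (p q : int) (s : int * int) (cs : seq int) : option (int * int) :=
  match cs with
  | [::] => Some s
  | c :: cs' => if cstep p q s c is Some s' then crun p q s' cs' else None
  end.

Lemma crun_spec (p q : int) (q0 : q != 0) cs a b :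
  crun p q (a, b) cs = Some (0, 0) <->
  exists S : {poly int}, Poly cs - ((p * a + b)%:P + a%:P * 'X) = S * tpoly p q.
Proof.
elim: cs a b => [|c cs IH] a b /=.
  rewrite polyC0; split.
    by case=> -> ->; exists 0; rewrite !(mulr0, mul0r, addr0, polyC0, subr0).
  case=> S E.
  have SZ : S = 0.
    apply/eqP; apply/negPn/negP => Sn0.
    have := size_Mmonic Sn0 (tpoly_monic p q); rewrite -E tpoly_size.
    move=> h.
    have : (size (0 - ((p * a + b)%:P + a%:P * 'X))%R <= 2)%N.
      rewrite sub0r size_opp; apply: (leq_trans (size_add _ _)).
      rewrite geq_max size_polyC; apply/andP; split; first by case: (_ != 0).
      by apply: (leq_trans (size_polyMleq _ _)); rewrite size_polyX size_polyC; case: (a != 0).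
    rewrite h; move: Sn0; rewrite -size_poly_eq0; case: (size S) => // n _; lia.
  move: E; rewrite SZ mul0r sub0r => /eqP; rewrite oppr_eq0 => /eqP E.
  have E1 := congr1 (fun P : {poly int} => P`_1) E; have E0 := congr1 (fun P : {poly int} => P`_0) E.
  move: E1 E0; rewrite /= !coefE /= => E1 E0.
  move: E1; rewrite add0r mulr1 => Ea; move: E0; rewrite Ea !mulr0 addr0 add0r => ->.
  done.
have coef0 : forall S : {poly int}, (S * tpoly p q)`_0 = - (S`_0 * q).
  move=> S; rewrite coefM big_ord1 /tpoly !coefE /=; ring.
rewrite /cstep /=; case: ifP => hdiv.
  rewrite IH; set s0 := ((p * a + b - c) %/ q)%Z.
  have hs0 : s0 * q = p * a + b - c by rewrite divzK.
  have hc : c = p * a + b - s0 * q by rewrite hs0; ring.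
  split.
    case=> S' E'; exists (S' * 'X + s0%:P).
    have hP : Poly cs = S' * tpoly p q + ((p * s0 + a)%:P + s0%:P * 'X).
      by rewrite -E' subrK.
    rewrite cons_poly_def hP hc /tpoly !(polyCD, polyCM, polyCN, polyCB); ring.
  case=> S E.
  have E0 := congr1 (fun P : {poly int} => P`_0) E; move: E0.
  rewrite coef0 !coefE /= mulr0 addr0 => E0.
  have hS0 : S`_0 = s0.
    rewrite /s0; have -> : p * a + b - c = S`_0 * q by rewrite -[RHS]opprK -E0 opprB.
    by rewrite mulzK.
  exists (drop_poly 1 S).
  have hS : S = drop_poly 1 S * 'X + s0%:P.
    apply/polyP => -[|i]; rewrite !coefE /=; first by rewrite add0r.
    by rewrite addr0 addn1.
  apply: (mulIf (negbT (polyX_eq0 _))) => /=.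
  move: E; rewrite cons_poly_def {1}hS => E.
  have hPX : Poly cs * 'X = (drop_poly 1 S * 'X + s0%:P) * tpoly p q - c%:P + ((p * a + b)%:P + a%:P * 'X).
    by rewrite -E; ring.
  rewrite mulrBl hPX hc /tpoly !(polyCD, polyCM, polyCN, polyCB); ring.
split => //; case=> S E.
have E0 := congr1 (fun P : {poly int} => P`_0) E; move: E0.
rewrite coef0 !coefE /= mulr0 addr0 => E0.
have : (q %| p * a + b - c)%Z.
  have -> : p * a + b - c = S`_0 * q by rewrite -[RHS]opprK -E0 opprB.
  by apply: dvdz_mull; rewrite dvdzz.
by rewrite hdiv.
Qed.


Lemma cstep_bound (p q B C : int) s c s' :
  q != 0 -> (`|p| + 1) * B + C <= `|q| * B ->
  `|s.1| <= B -> `|s.2| <= B -> `|c| <= C -> cstep p q s c = Some s' ->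
  `|s'.1| <= B /\ `|s'.2| <= B.
Proof.
move=> q0 hB h1 h2 hc; rewrite /cstep; case: ifP => // hd [<-] /=; split => //.
set v := p * s.1 + s.2 - c.
have hv : (v %/ q)%Z * q = v by rewrite divzK.
have hvn : `|v| <= `|q| * B.
  apply: le_trans hB; rewrite /v.
  apply: (le_trans (ler_normB _ _)); apply: lerD => //.
  apply: (le_trans (ler_normD _ _)); rewrite mulrDl mul1r normrM.
  by apply: lerD => //; apply: ler_wpM2l.
have qp : 0 < `|q| by rewrite normr_gt0.
rewrite -(ler_pM2r qp) -normrM hv mulrC //.
Qed.


Lemma fa_ext (A : Type) (L L' : seq A -> Prop) :
  (forall x, L x <-> L' x) -> FA_recognizable_lang L -> FA_recognizable_lang L'.
Proof. by move=> h [M hM]; exists M => x; rewrite hM. Qed.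

Lemma fa_fin (A : Type) (S : finType) (s0 : S) (tr : S -> A -> S) (fin : pred S)
  (L : seq A -> Prop) :
  (forall x, fin (foldl tr s0 x) <-> L x) -> FA_recognizable_lang L.
Proof. by move=> h; exists (DFA s0 fin tr). Qed.

Lemma fa_closed (A : Type) (S : choiceType) (s0 : S) (tr : S -> A -> S) (fin : pred S)
  (U : seq S) (L : seq A -> Prop) :
  s0 \in U -> (forall s a, s \in U -> tr s a \in U) ->
  (forall x, fin (foldl tr s0 x) <-> L x) -> FA_recognizable_lang L.
Proof.
move=> h0 hcl hL.
pose tr' (s : seq_sub U) (a : A) : seq_sub U := SeqSub (hcl (ssval s) a (ssvalP s)).
apply: (@fa_fin A _ (SeqSub h0) tr' (fun s => fin (ssval s))) => x.
suff -> : forall s, ssval (foldl tr' s x) = foldl tr (ssval s) x by apply: hL.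
by elim: x => [|a x IH] s //=; rewrite IH.
Qed.

Lemma fa_and (A : Type) (L1 L2 : seq A -> Prop) :
  FA_recognizable_lang L1 -> FA_recognizable_lang L2 ->
  FA_recognizable_lang (fun x => L1 x /\ L2 x).
Proof.
case=> M1 h1 [M2 h2].
apply: (@fa_fin A _ (dfa_start M1, dfa_start M2)
  (fun s a => (dfa_trans s.1 a, dfa_trans s.2 a))
  (fun s => dfa_final s.1 && dfa_final s.2)) => x.
have -> : forall s1 s2, foldl (fun s a => (dfa_trans s.1 a, dfa_trans s.2 a)) (s1, s2) x
   = (foldl (@dfa_trans A M1) s1 x, foldl (@dfa_trans A M2) s2 x).
  by elim: x => [|a x IH] s1 s2 //=; rewrite IH.
by rewrite -h1 -h2 /dfa_accepts /=; split => [/andP|[-> ->]].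
Qed.

Lemma fa_not (A : Type) (L : seq A -> Prop) :
  FA_recognizable_lang L -> FA_recognizable_lang (fun x => ~ L x).
Proof.
case=> M h; apply: (@fa_fin A _ (dfa_start M) (@dfa_trans A M) (fun s => ~~ dfa_final s)) => x.
by rewrite -h /dfa_accepts; split => [/negP|/negP].
Qed.

Lemma conv2_nil_r (u : seq int) : conv2 u [::] = map (fun a => (Some a, None)) u.
Proof. by elim: u => //= a u ->. Qed.

Lemma conv2_fst (u w : seq int) : pmap (fun x => x.1) (conv2 u w) = u.
Proof.
elim: u w => [|a u IH] [|b w] //=.
- by elim: w => //.
- by rewrite IH.
- by rewrite IH.
Qed.

Lemma conv2_swap (u w : seq int) :
  map (fun x => (x.2, x.1)) (conv2 u w) = conv2 w u.
Proof.
elim: u w => [|a u IH] [|b w] //=.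
- by rewrite conv2_nil_r -map_comp.
- by rewrite conv2_nil_r -map_comp.
- by rewrite IH.
Qed.

Lemma conv2_snd (u w : seq int) : pmap (fun x => x.2) (conv2 u w) = w.
Proof.
by rewrite -{2}(conv2_fst w u) -conv2_swap; elim: (conv2 w u) => //= x s ->.
Qed.

Lemma conv2_inj (u w u' w' : seq int) : conv2 u w = conv2 u' w' -> u = u' /\ w = w'.
Proof.
move=> h; split; first by rewrite -(conv2_fst u w) h conv2_fst.
by rewrite -(conv2_snd u w) h conv2_snd.
Qed.

Section Lift.
Variable M : dfa int.
Local Notation S := (dfa_state M).
Definition ltr (s : S * bool * bool * bool) (l : option int * option int) :=
  let: (m, e1, e2, d) := s in
  match l with
  | (Some a, Some b) => if e1 || e2 then (m, e1, e2, true) else (dfa_trans m a, e1, e2, d)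
  | (Some a, None) => if e1 then (m, e1, e2, true) else (dfa_trans m a, e1, true, d)
  | (None, Some b) => if e2 then (m, e1, e2, true) else (m, true, e2, d)
  | (None, None) => (m, e1, e2, true)
  end.

Lemma ltr_dead x m e1 e2 : (foldl ltr (m, e1, e2, true) x).2 = true.
Proof.
elim: x m e1 e2 => [|[[a|] [b|]] x IH] m e1 e2 //=;
  by case: ifP => _; rewrite IH.
Qed.

Lemma ltr_A2 w m : foldl ltr (m, true, false, false) (map (fun b => (None, Some b)) w)
  = (m, true, false, false).
Proof. by elim: w => //=. Qed.

Lemma ltr_A1 u m : foldl ltr (m, false, true, false) (map (fun a => (Some a, None)) u)
  = (foldl (@dfa_trans _ M) m u, false, true, false).
Proof. by elim: u m => //=. Qed.

Lemma ltr_A u w m : exists e1 e2,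
  foldl ltr (m, false, false, false) (conv2 u w) = (foldl (@dfa_trans _ M) m u, e1, e2, false).
Proof.
elim: u w m => [|a u IH] [|b w] m /=.
- by exists false, false.
- by rewrite ltr_A2; exists true, false.
- by rewrite conv2_nil_r ltr_A1; exists false, true.
- exact: IH.
Qed.

Lemma ltr_H1 x m : (foldl ltr (m, false, true, false) x).2 = false ->
  exists u, x = map (fun a => (Some a, None)) u.
Proof.
elim: x m => [|[[a|] [b|]] x IH] m //=; try by [exists [::]]; try by rewrite ltr_dead.
by move=> /IH [u ->]; exists (a :: u).
Qed.

Lemma ltr_H2 x m : (foldl ltr (m, true, false, false) x).2 = false ->
  exists w, x = map (fun b => (None, Some b)) w.
Proof.
elim: x m => [|[[a|] [b|]] x IH] m //=; try by [exists [::]]; try by rewrite ltr_dead.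
by move=> /IH [u ->]; exists (b :: u).
Qed.

Lemma ltr_B x m : (foldl ltr (m, false, false, false) x).2 = false ->
  exists u w, x = conv2 u w.
Proof.
elim: x m => [|[[a|] [b|]] x IH] m /=; first by exists [::], [::].
- by move=> /IH [u [w ->]]; exists (a :: u), (b :: w).
- by move=> /ltr_H1 [u ->]; exists (a :: u), [::]; rewrite /= conv2_nil_r.
- by move=> /ltr_H2 [w ->]; exists [::], (b :: w).
- by rewrite ltr_dead.
Qed.
End Lift.

Lemma fa_lift1 (P : seq int -> Prop) :
  FA_recognizable_lang P ->
  FA_recognizable_lang (fun x => exists u w, P u /\ x = conv2 u w).
Proof.
case=> M hM.
apply: (@fa_fin _ _ (dfa_start M, false, false, false) (@ltr M)
   (fun s => ~~ s.2 && dfa_final s.1.1.1)) => x; split.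
- case/andP => hd hf.
  have [u [w ex]] := @ltr_B M x _ (negbTE hd).
  exists u, w; split => //; apply/hM.
  move: hf; rewrite ex; have [e1 [e2 ->]] := ltr_A M u w (dfa_start M).
  by [].
- case=> u [w [hu ->]].
  have [e1 [e2 ->]] := ltr_A M u w (dfa_start M).
  by rewrite /=; apply/hM.
Qed.

Lemma fa_swap (L : seq (option int * option int) -> Prop) :
  FA_recognizable_lang L ->
  FA_recognizable_lang (fun x => L (map (fun l => (l.2, l.1)) x)).
Proof.
case=> M hM.
apply: (@fa_fin _ _ (dfa_start M) (fun s l => dfa_trans s (l.2, l.1)) (@dfa_final _ M)) => x.
rewrite -hM /dfa_accepts; suff -> : forall s, foldl (fun s l => dfa_trans s (l.2, l.1)) s x
  = foldl (@dfa_trans _ M) s (map (fun l => (l.2, l.1)) x) by [].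
by elim: x => //= l x IH s; rewrite IH.
Qed.

Lemma fa_lift2 (P : seq int -> Prop) :
  FA_recognizable_lang P ->
  FA_recognizable_lang (fun x => exists u w, P w /\ x = conv2 u w).
Proof.
move=> /fa_lift1 /fa_swap; apply: fa_ext => x; split.
- case=> u [w [hu ex]]; exists w, u; split => //.
  rewrite -conv2_swap -ex -map_comp map_id_in //.
  by case.
- case=> u [w [hw ->]]; exists w, u; split => //; by rewrite conv2_swap.
Qed.


Definition rng (n : nat) : seq int := [seq (i%:Z - n%:Z) | i <- iota 0 (2 * n).+1].

Lemma mem_rng n x : (x \in rng n) = (`|x| <= n%:Z).
Proof.
rewrite ler_norml; apply/mapP/idP.
- case=> i; rewrite mem_iota => /andP [_ hi] ->; apply/andP; split; lia.
- case/andP => h1 h2; exists (absz (x + n%:Z)); last by lia.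
  rewrite mem_iota /=; lia.
Qed.

Lemma mem_pairs (T1 T2 : eqType) (s : seq T1) (t : seq T2) x y :
  ((x, y) \in [seq (a, b) | a <- s, b <- t]) = (x \in s) && (y \in t).
Proof.
apply/idP/andP.
- by case/allpairsP => -[a b] /= [ha hb [-> ->]].
- by case=> hx hy; apply: allpairs_f.
Qed.

Section DomAut.
Variables (p q : int).
Hypothesis hpq : 1 + `|p| < `|q|.

Let q0 : q != 0.
Proof. by rewrite -normr_gt0; apply: le_lt_trans hpq; rewrite addr_ge0. Qed.

Definition Qn := (absz q).-1.
Definition Bn := (2 * Qn)%N.

Lemma sigE a : (a \in rng Qn) = (`|a| < `|q|).
Proof.
rewrite mem_rng /Qn; have := q0; rewrite -absz_eq0 => hq.
rewrite -[`|q|]abszE; lia.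
Qed.

Definition Cfg := ((int * int) * (nat * bool))%type.

Definition Klist : seq Cfg :=
  [seq (s, lz) | s <- [seq (x, y) | x <- rng Bn, y <- rng Bn],
                 lz <- [seq (l, z) | l <- iota 0 3, z <- [:: true; false]]].

Lemma mem_Klist (c : Cfg) :
  (c \in Klist) = [&& `|c.1.1| <= Bn%:Z, `|c.1.2| <= Bn%:Z & (c.2.1 < 3)%N].
Proof.
case: c => [[x y] [l z]]; rewrite /Klist !mem_pairs !mem_rng mem_iota /=.
by case: z; rewrite ?andbT /=; case: (_ <= _); case: (_ <= _).
Qed.

Definition newl (l : nat) (a b : int) : nat :=
  if l == 0%N then (if a < b then 1%N else if a == b then 0%N else 2%N) else l.

Definition gstep (c : Cfg) (a b : int) : option Cfg :=
  omap (fun s' => (s', (newl c.2.1 a b, a == 0))) (cstep p q c.1 (a - b)).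

Lemma gstep_closed c a b c' : c \in Klist -> `|a| < `|q| -> `|b| < `|q| ->
  gstep c a b = Some c' -> c' \in Klist.
Proof.
rewrite !mem_Klist => /and3P [h1 h2 h3] ha hb.
rewrite /gstep; case E: cstep => [s'|] //= [<-] /=.
have hq : `|q| = (Qn%:Z + 1).
  rewrite /Qn; have := q0; rewrite -absz_eq0 => hq.
  rewrite -[`|q|]abszE; lia.
have := @cstep_bound p q Bn%:Z Bn%:Z c.1 (a - b) s' q0.
case => //.
- rewrite hq /Bn; move: hpq; rewrite hq.
  have hp : 0 <= `|p| by [].
  move=> h; nia.
- apply: (le_trans (ler_normB _ _)); move: ha hb; rewrite hq /Bn; lia.
move=> -> -> /=.
rewrite /newl; case: ifP => _; last by [].
by case: ifP => //; case: ifP.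
Qed.

Definition K := seq_sub Klist.

Definition trK (X : {set K}) (b : int) : {set K} :=
  [set k' | [exists k in X, has (fun a => gstep (ssval k) a b == Some (ssval k')) (rng Qn)]].

Fixpoint grun (c : Cfg) (u w : seq int) : option Cfg :=
  match u, w with
  | a :: u', b :: w' => if gstep c a b is Some c' then grun c' u' w' else None
  | _, _ => Some c
  end.

Lemma nfa_run w : in_Sigma q w -> forall X (k : K),
  (k \in foldl trK X w) <->
  exists k0, k0 \in X /\ exists u, size u = size w /\ in_Sigma q u /\
     grun (ssval k0) u w = Some (ssval k).
Proof.
elim: w => [|b w IH] hw X k /=.
  split.
    by move=> hk; exists k; split => //; exists [::].
  case=> k0 [hk0 [[|a u] [//= _ [_ [hg]]]]].
  by have -> : k = k0 by apply: val_inj; rewrite /= hg.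
move: hw; rewrite /in_Sigma /= => /andP [hb hw].
rewrite IH //; split.
  case=> k1 [hk1 [u [hu [hsu hg]]]].
  move: hk1; rewrite inE => /existsP [k0 /andP [hk0 /hasP [a ha /eqP hga]]].
  exists k0; split => //; exists (a :: u); split; first by rewrite /= hu.
  by split; [rewrite /in_Sigma /= -sigE ha | rewrite /= hga].
case=> k0 [hk0 [[|a u] [//= [hu] [/andP [ha hsu]]]]].
case E: gstep => [c1|] // hg.
have hc1 : c1 \in Klist := @gstep_closed (ssval k0) a b c1 (ssvalP k0) ha hb E.
exists (SeqSub hc1); split.
  rewrite inE; apply/existsP; exists k0; rewrite hk0 andTb.
  by apply/hasP; exists a; rewrite ?sigE // E.
by exists u.
Qed.

Fixpoint diffs (u w : seq int) : seq int :=
  match u, w with a :: u', b :: w' => (a - b) :: diffs u' w' | _, _ => [::] end.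
Fixpoint lexrun (l : nat) (u w : seq int) : nat :=
  match u, w with a :: u', b :: w' => lexrun (newl l a b) u' w' | _, _ => l end.
Fixpoint zrun (z : bool) (u : seq int) : bool :=
  match u with a :: u' => zrun (a == 0) u' | [::] => z end.

Lemma grunE u w s l z : size u = size w ->
  grun (s, (l, z)) u w =
  omap (fun s' => (s', (lexrun l u w, zrun z u))) (crun p q s (diffs u w)).
Proof.
elim: u w s l z => [|a u IH] [|b w] s l z //= [hs].
rewrite /gstep /=; case: cstep => [s'|] //=.
exact: IH.
Qed.

Lemma lexrun_fix l u w : l != 0%N -> lexrun l u w = l.
Proof.
elim: u w l => [|a u IH] [|b w] l //= hl.
by rewrite /newl (negbTE hl) IH.
Qed.

Lemma lexrun0 u w : (lexrun 0 u w == 1%N) = lex_lt u w.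
Proof.
elim: u w => [|a u IH] [|b w] //=.
rewrite /newl /=; case: ltP => hab /=; first by rewrite lexrun_fix.
case: (boolP (a == b)) => hab2 /=; first by rewrite IH.
by rewrite lexrun_fix.
Qed.

Lemma zrunE z u : zrun z u = if u is [::] then z else (last 0 u == 0).
Proof. by elim: u z => [|a u IH] z //=; rewrite IH; case: u {IH}. Qed.

Lemma Poly_diffs u w : size u = size w -> Poly (diffs u w) = Poly u - Poly w.
Proof.
elim: u w => [|a u IH] [|b w] //= hs; first by rewrite subr0.
by case: hs => hs; rewrite !cons_poly_def IH // polyCB; ring.
Qed.

Lemma Poly_pad (s : seq int) n : Poly (s ++ nseq n 0) = Poly s.
Proof.
elim: s => [|a s IH] /=; last by rewrite IH.
by elim: n => //= n ->; rewrite cons_poly_def mul0r addr0.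
Qed.

Lemma crun00 cs : crun p q (0, 0) cs = Some (0, 0) <-> exists S : {poly int}, Poly cs = S * tpoly p q.
Proof.
rewrite crun_spec //; have -> : (p * 0 + 0)%:P + 0%:P * 'X = 0 :> {poly int}.
  by rewrite mulr0 addr0 polyC0 mul0r addr0.
by rewrite subr0.
Qed.

Lemma grun_closed c u w c' : c \in Klist -> in_Sigma q u -> in_Sigma q w ->
  grun c u w = Some c' -> c' \in Klist.
Proof.
elim: u w c => [|a u IH] [|b w] c //=; try by move=> hc _ _ [<-].
move=> hc /andP [ha hu] /andP [hb hw].
case E: gstep => [c1|] // hg.
exact: (IH w c1 (@gstep_closed c a b c1 hc ha hb E) hu hw hg).
Qed.

Definition c0 : Cfg := ((0, 0), (0%N, false)).
Definition X0 : {set K} := [set k | ssval k == c0].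
Definition acc (c : Cfg) : bool := (c.1 == (0, 0)) && ((c.2.1 == 1%N) || c.2.2).
Definition badacc (w : seq int) : bool := [exists k in foldl trK X0 w, acc (ssval k)].

Lemma c0K : c0 \in Klist.
Proof. by rewrite mem_Klist. Qed.

Lemma badacc_run w : in_Sigma q w ->
  badacc w <-> exists u, [/\ size u = size w, in_Sigma q u,
     crun p q (0, 0) (diffs u w) = Some (0, 0) & (lexrun 0 u w == 1%N) || zrun false u].
Proof.
move=> hw; split.
  case/existsP => k /andP [hk hacc].
  have [k0 [hk0 [u [hu [hsu hg]]]]] := (@nfa_run w hw X0 k).1 hk.
  move: hk0; rewrite inE => /eqP hk0.
  exists u; move: hg; rewrite hk0 grunE //.
  case E: crun => [s'|] //= [hs]; move: hacc; rewrite -hs /acc /= => /andP [/eqP hs' h].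
  by split => //; rewrite -hs'.
case=> u [hu hsu hc hl].
have hg : grun c0 u w = Some ((0, 0), (lexrun 0 u w, zrun false u)) by rewrite grunE // hc.
have hK := @grun_closed c0 u w _ c0K hsu hw hg.
apply/existsP; exists (SeqSub hK); apply/andP; split; last by rewrite /acc /= ?eqxx hl.
apply/(@nfa_run w hw); exists (SeqSub c0K); split; first by rewrite inE.
by exists u.
Qed.

Lemma bad_spec w : in_Sigma q w ->
  badacc w <-> exists u, [/\ in_Sigma q u, llex_lt u w & str_equiv p q u w].
Proof.
move=> hw; rewrite badacc_run //; split.
  case=> u [hu hsu /crun00 [S hS] /orP [hl|hz]].
    exists u; split => //; first by rewrite /llex_lt hu ltnn eqxx /= -lexrun0.
    by exists S; rewrite -Poly_diffs.
  move: hz; rewrite zrunE.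
  case/lastP: u hu hsu hS => [|v a] hu hsu hS //.
  case E: (rcons v a) => [|x y]; first by move: E; case: (v) => //.
  rewrite -E last_rcons => /eqP ha; subst a.
  exists v; split.
  - by move: hsu; rewrite /in_Sigma all_rcons => /andP [].
  - by rewrite /llex_lt -hu size_rcons ltnSn.
  - exists S; rewrite -hS Poly_diffs //.
    by rewrite -cats1 -[[:: 0]]/(nseq 1 0) Poly_pad.
case=> u [hsu /orP [hlt|/andP [/eqP hs hl]] [S hS]].
  exists (u ++ nseq (size w - size u) 0).
  have hsz : size (u ++ nseq (size w - size u) 0) = size w.
    by rewrite size_cat size_nseq subnKC // ltnW.
  split => //.
  - rewrite /in_Sigma all_cat all_nseq; move: hsu; rewrite /in_Sigma => -> /=.
    by rewrite normr0 normr_gt0 q0 orbT.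
  - by apply/crun00; exists S; rewrite Poly_diffs // Poly_pad.
  - apply/orP; right; rewrite zrunE.
    case E: (size w - size u)%N => [|k]; first by move: hlt; rewrite -subn_gt0 E.
    rewrite /= last_cat /=; case: u {hsu hS hsz E hlt} => /=; by elim: k.
exists u; split => //.
- by apply/crun00; exists S; rewrite Poly_diffs.
- by rewrite lexrun0 hl.
Qed.

Lemma dom_fold w b0 X :
  foldl (fun s b => (s.1 && (`|b| < `|q|), trK s.2 b)) (b0, X) w = (b0 && in_Sigma q w, foldl trK X w).
Proof.
elim: w b0 X => [|b w IH] b0 X /=; first by rewrite andbT.
by rewrite IH /in_Sigma /= andbA.
Qed.

Lemma Dom_fa : FA_recognizable_lang (Dom p q).
Proof.
apply: (@fa_fin _ _ (true, X0) (fun s b => (s.1 && (`|b| < `|q|), trK s.2 b))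
          (fun s => s.1 && ~~ [exists k in s.2, acc (ssval k)])) => w.
rewrite dom_fold /=; split.
  case/andP => hw hb; split => // u hu hl he.
  move/negP: hb; apply; apply/(@bad_spec w hw); by exists u.
case=> hw hn; rewrite hw /=; apply/negP => /(@bad_spec w hw) [u [hu hl he]].
exact: (hn u hu hl he).
Qed.

End DomAut.


Lemma g_red (p q : int) (g : {poly int}) :
  exists (a b : int) (k : {poly int}), g = k * tpoly p q + (b%:P + a%:P * 'X).
Proof.
have t0 : tpoly p q != 0 by rewrite -size_poly_eq0 tpoly_size.
have E := Pdiv.RingMonic.rdivp_eq (tpoly_monic p q) g.
have hs := Pdiv.Ring.ltn_rmodpN0 g t0.
move: hs; rewrite tpoly_size.
set r := Pdiv.CommonRing.rmodp g (tpoly p q) in E * => hs.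
exists r`_1, r`_0, (Pdiv.CommonRing.rdivp g (tpoly p q)).
rewrite {1}E; congr (_ + _).
apply/polyP => -[|[|i]]; rewrite !coefE /=.
- by rewrite mulr0 addr0.
- by rewrite mulr1 add0r.
- by rewrite mulr0 addr0 nth_default // -ltnS; apply: leq_trans hs _.
Qed.


Lemma crun_cat p q s cs1 cs2 :
  crun p q s (cs1 ++ cs2) = obind (fun s' => crun p q s' cs2) (crun p q s cs1).
Proof. by elim: cs1 s => //= c cs IH s; case: cstep. Qed.

Section L3.
Variables (p q al be : int).
Hypothesis hpq : 1 + `|p| < `|q|.

Let q0 : q != 0.
Proof. by rewrite -normr_gt0; apply: le_lt_trans hpq; rewrite addr_ge0. Qed.

Definition C3 := (Qn q * (1 + absz al + absz be))%N.

Definition st3 := option ((int * int) * int).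

Definition step3 (o : st3) (l : option int * option int) : st3 :=
  match o with
  | None => None
  | Some (s, prev) =>
    let a := odflt 0 l.1 in let b := odflt 0 l.2 in
    if (`|a| < `|q|) && (`|b| < `|q|) then
      omap (fun s' => (s', a)) (cstep p q s (b - be * a - al * prev))
    else None
  end.

Definition fin3 (o : st3) : bool :=
  if o is Some (s, prev) then crun p q s [:: - (al * prev)] == Some (0, 0) else false.

Definition U3 : seq st3 :=
  None :: map Some [seq (s, z) | s <- [seq (x, y) | x <- rng C3, y <- rng C3], z <- rng (Qn q)].

Lemma mem_U3 s prev : (Some (s, prev) \in U3) =
   [&& `|s.1| <= (C3%:Z), `|s.2| <= C3%:Z & `|prev| <= (Qn q)%:Z].
Proof.
rewrite /U3 in_cons (_ : (Some (s, prev) == None) = false) // orFb mem_map; last by move=> x y [].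
by case: s => x y; rewrite !mem_pairs !mem_rng andbA.
Qed.

Lemma U3_closed o l : o \in U3 -> step3 o l \in U3.
Proof.
case: o => [[s prev]|] //; rewrite mem_U3 => /and3P [h1 h2 h3] /=.
case: ifP => [/andP [ha hb]|_]; last by rewrite in_cons.
case E: cstep => [s'|] /=; last by rewrite in_cons.
have hq : `|q| = ((Qn q)%:Z + 1).
  rewrite /Qn; have := q0; rewrite -absz_eq0 => hq.
  rewrite -[`|q|]abszE; lia.
have [] := @cstep_bound p q C3%:Z C3%:Z s _ s' q0 _ h1 h2 _ E.
- rewrite hq; move: hpq; rewrite hq => h.
  have hp : 0 <= `|p| by [].
  have hC : 0 <= C3%:Z by [].
  nia.
- have hA : `|odflt 0 l.1| <= (Qn q)%:Z by rewrite -ltzD1 -hq.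
  have hB : `|odflt 0 l.2| <= (Qn q)%:Z by rewrite -ltzD1 -hq.
  have e1 : `|be * odflt 0 l.1| <= `|be| * (Qn q)%:Z by rewrite normrM ler_wpM2l.
  have e2 : `|al * prev| <= `|al| * (Qn q)%:Z by rewrite normrM ler_wpM2l.
  have e3 := ler_normB (odflt 0 l.2 - be * odflt 0 l.1) (al * prev).
  have e4 := ler_normB (odflt 0 l.2) (be * odflt 0 l.1).
  have hal : `|al| = (absz al)%:Z by rewrite abszE.
  have hbe : `|be| = (absz be)%:Z by rewrite abszE.
  apply: le_trans e3 _; apply: le_trans (lerD e4 (lexx _)) _.
  apply: le_trans (lerD (lerD hB e1) e2) _.
  rewrite hal hbe /C3 PoszM !PoszD le_eqVlt; apply/orP; left; apply/eqP; ring.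
move=> h1' h2'; rewrite mem_U3 h1' h2' /= -ltzD1 -hq //.
Qed.

Definition F1 (x : seq (option int * option int)) := map (fun l => odflt 0 l.1) x.
Definition F2 (x : seq (option int * option int)) := map (fun l => odflt 0 l.2) x.
Definition valid (l : option int * option int) :=
  (`|odflt 0 l.1| < `|q|) && (`|odflt 0 l.2| < `|q|).

Fixpoint cseq (prev : int) (x : seq (option int * option int)) : seq int :=
  match x with
  | [::] => [::]
  | l :: x' => (odflt 0 l.2 - be * odflt 0 l.1 - al * prev) :: cseq (odflt 0 l.1) x'
  end.

Lemma step3_none x : foldl step3 None x = None.
Proof. by elim: x. Qed.

Lemma step3_run x s prev :
  foldl step3 (Some (s, prev)) x =
  if all valid x then omap (fun s' => (s', last prev (F1 x))) (crun p q s (cseq prev x))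
  else None.
Proof.
elim: x s prev => [|l x IH] s prev //=.
rewrite /valid; case: ifP => hv /=; last by rewrite step3_none.
case: cstep => [s'|] /=; last by rewrite step3_none; case: all.
by rewrite IH.
Qed.

Lemma cseq_poly x prev :
  Poly (cseq prev x ++ [:: - (al * last prev (F1 x))]) =
  Poly (F2 x) - (be%:P + al%:P * 'X) * Poly (F1 x) - (al * prev)%:P.
Proof.
elim: x prev => [|l x IH] prev /=.
  by rewrite cons_poly_def polyCN; ring.
rewrite !cons_poly_def IH !(polyCD, polyCM, polyCN, polyCB); ring.
Qed.

Lemma fin3_spec x :
  fin3 (foldl step3 (Some ((0, 0), 0)) x) <->
  all valid x /\ exists S : {poly int}, Poly (F2 x) - (be%:P + al%:P * 'X) * Poly (F1 x) = S * tpoly p q.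
Proof.
rewrite step3_run; case: ifP => hv; last by split => // -[].
have key : fin3 (omap (fun s' => (s', last 0 (F1 x))) (crun p q (0, 0) (cseq 0 x)))
  <-> (crun p q (0, 0) (cseq 0 x ++ [:: - (al * last 0 (F1 x))]) = Some (0, 0)).
  by rewrite crun_cat; case: crun => //= -[s1 s2] /=; split => [/eqP|->].
rewrite key crun00 // cseq_poly mulr0 polyC0 subr0.
by split => [h|[]].
Qed.
End L3.


Lemma F1_conv u w : F1 (conv2 u w) = u ++ nseq (size w - size u) 0.
Proof.
elim: u w => [|a u IH] [|b w] //=.
- by rewrite /F1 -map_comp; congr (_ :: _); elim: w => //= c w ->.
- by rewrite cats0 /F1 conv2_nil_r -map_comp; congr (_ :: _); elim: u {IH} => //= c u ->.
- by rewrite subSS -IH.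
Qed.

Lemma F2_conv u w : F2 (conv2 u w) = w ++ nseq (size u - size w) 0.
Proof.
elim: u w => [|a u IH] [|b w] //=.
- by rewrite cats0 /F2 -map_comp; congr (_ :: _); elim: w => //= c w ->.
- by rewrite /F2 conv2_nil_r -map_comp; congr (_ :: _); elim: u {IH} => //= c u ->.
- by rewrite subSS -IH.
Qed.

Lemma valid_conv (q : int) u w : q != 0 ->
  all (valid q) (conv2 u w) = in_Sigma q u && in_Sigma q w.
Proof.
move=> q0.
have -> : forall x, all (valid q) x =
    all (fun a => `|a| < `|q|) (F1 x) && all (fun a => `|a| < `|q|) (F2 x).
  by elim=> //= l x ->; rewrite /valid andbACA.
have h0 : `|0 : int| < `|q| by rewrite normr0 normr_gt0.
by rewrite F1_conv F2_conv !all_cat !all_nseq h0 !orbT !andbT.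
Qed.

Lemma aux1 (S r k P t : {poly int}) : S * t + r * P - (k * t + r) * P = (S - k * P) * t.
Proof. by rewrite mulrDl opprD addrACA subrr addr0 mulrBl -!mulrA (mulrC t). Qed.
Lemma aux2 (h r k P t : {poly int}) : h * t + (k * t + r) * P - r * P = (h + k * P) * t.
Proof. by rewrite mulrDl addrA addrK mulrDl -!mulrA (mulrC t). Qed.

Theorem proposition2 (p q : int) (g : {poly int}) (hpq : 1 + `|p| < `|q|) :
  FA_recognizable_rel2 (phi_graph p q g).
Proof.
have q0 : q != 0.
  by rewrite -normr_gt0; apply: le_lt_trans hpq; rewrite addr_ge0.
have [al [be [k hg]]] := g_red p q g.
have D := @Dom_fa p q hpq.
have A := @fa_lift1 _ D.
have B := @fa_lift2 _ D.
have Tr : FA_recognizable_lang (fun _ : seq int => True).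
  by apply: (@fa_fin _ _ tt (fun _ _ => tt) (fun _ => true)).
have Sh := @fa_lift1 _ Tr.
have C : FA_recognizable_lang
    (fun x => fin3 p q al (foldl (step3 p q al be) (Some ((0, 0), 0)) x)).
  apply: (@fa_closed _ _ (Some ((0, 0), 0)) (step3 p q al be) (fin3 p q al) (U3 q al be)).
  - by rewrite mem_U3 /= normr0.
  - by move=> s a; apply: (@U3_closed p q al be hpq).
  - by [].
have := @fa_and _ _ _ A (@fa_and _ _ _ B (@fa_and _ _ _ Sh C)).
apply: fa_ext => x; split.
- case=> [[u [w [Du ex]]] [[u' [w' [Dw' e']]] [_ hf]]].
  have [eu ew] : u' = u /\ w' = w by apply: conv2_inj; rewrite -e' -ex.
  subst u' w'; exists u, w; split => //; split => //; split => //.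
  move: hf; rewrite ex => /(@fin3_spec p q al be hpq _) [_ [S hS]].
  exists (S - k * poly_of u).
  move: hS; rewrite F1_conv F2_conv !Poly_pad /poly_of => hS.
  have hw : Poly w = S * tpoly p q + (be%:P + al%:P * 'X) * Poly u by rewrite -hS subrK.
  by rewrite hg hw /poly_of aux1.
- case=> u [w [[Du [Dw hs]] ->]].
  split; first by exists u, w.
  split; first by exists u, w.
  split; first by exists u, w.
  apply/(@fin3_spec p q al be hpq _); split.
    by rewrite valid_conv // Du.1 Dw.1.
  case: hs => h hh; exists (h + k * poly_of u).
  rewrite F1_conv F2_conv !Poly_pad; move: hh; rewrite /poly_of => hh.
  have hw : Poly w = h * tpoly p q + g * Poly u by rewrite -hh subrK.
  by rewrite hw hg /poly_of aux2.
Qed.
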